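(* Let $G$ be a connected cograph which is $k$-connected, and let $S$ be a minimal vertex separator of $G$ with $|S|=k$. Then every vertex $v\in V(G)\setminus S$ is adjacent to every vertex of $S$.
   Context: A cograph is a graph that can be built from single vertices by repeatedly taking disjoint unions and joins; equivalently, a graph with no induced path on four vertices. A vertex separator of a connected graph $G$ is a set $S\subset V(G)$ such that the subgraph induced on $V(G)\setminus S$ is disconnected; it is minimal if no proper subset of $S$ is a vertex separator; a minimum vertex separator is a minimal vertex separator of least size. The paper calls $G$ $k$-connected if there exists a minimum vertex separator of size $k$. *)

(* Defs.v *)
From mathcomp Require Import all_boot.
Set Implicit Arguments. Unset Strict Implicit. Unset Printing Implicit Defensive.

Definition simple_graph (T : finType) (e : rel T) : Prop :=
  symmetric e /\ irreflexive e.

Definition induced_rel (T : finType) (e : rel T) (A : {set T}) : rel T :=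
  [rel x y | [&& x \in A, y \in A & e x y]].

Definition connected_on (T : finType) (e : rel T) (A : {set T}) : Prop :=
  A != set0 /\ forall x y, x \in A -> y \in A -> connect (induced_rel e A) x y.

Definition disconnected_on (T : finType) (e : rel T) (A : {set T}) : Prop :=
  exists x y, [/\ x \in A, y \in A & ~~ connect (induced_rel e A) x y].

Definition connected_graph (T : finType) (e : rel T) : Prop :=
  connected_on e [set: T].

Definition cograph (T : finType) (e : rel T) : Prop :=
  ~ exists a b c d : T,
      [/\ e a b, e b c, e c d, ~~ e a c & ~~ e b d] /\ ~~ e a d.

Definition vertex_separator (T : finType) (e : rel T) (S : {set T}) : Prop :=
  disconnected_on e (~: S).

Definition minimal_vertex_separator (T : finType) (e : rel T) (S : {set T}) : Prop :=
  vertex_separator e S /\ forall S' : {set T}, S' \proper S -> ~ vertex_separator e S'.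

Definition minimum_vertex_separator (T : finType) (e : rel T) (S : {set T}) : Prop :=
  minimal_vertex_separator e S /\
  forall S' : {set T}, minimal_vertex_separator e S' -> #|S| <= #|S'|.

(* The paper's notion: G is k-connected iff some minimum vertex separator has size k. *)
Definition k_connected (T : finType) (e : rel T) (k : nat) : Prop :=
  exists S, minimum_vertex_separator e S /\ #|S| = k.

(* Main.v *)
Require Import Defs.
From mathcomp Require Import all_boot.

Lemma exit_edge (T : finType) (r : rel T) (X : pred T) x y :
  connect r x y -> X x -> ~~ X y -> exists x' y', [/\ X x', ~~ X y' & r x' y'].
Proof.
move/connectP=> [p]; elim: p x => [|z p IH] x /=.
  by move=> _ -> Xy; rewrite Xy.
case/andP=> rxz pz ly Xx nXy.
case Xz: (X z); first exact: IH pz ly Xz nXy.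
by exists x, z; rewrite Xz Xx rxz.
Qed.

Theorem corollary2 (T : finType) (e : rel T) (k : nat) (S : {set T}) :
  simple_graph e -> connected_graph e -> cograph e -> k_connected e k ->
  minimal_vertex_separator e S -> #|S| = k ->
  forall v s, v \notin S -> s \in S -> e v s.
Proof.
move=> [esy eirr] _ cog _ [[x [y [xA yA nxy]]] Smin] _ v s vS sS.
apply/negPn/negP => nvs.
set A := ~: S.
have vA : v \in A by rewrite in_setC.
have sA : s \notin A by rewrite in_setC sS.
have symA : connect_sym (induced_rel e A).
  apply: sym_connect_sym => a b /=; rewrite /induced_rel /= esy; by case: (a \in A); case: (b \in A).
set cA := connect (induced_rel e A).
set B := ~: (S :\ s).
have inB z : (z \in B) = (z \in A) || (z == s).
  by rewrite !in_setC in_setD1 negb_and negbK orbC.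
have cB : forall a b, a \in B -> b \in B -> connect (induced_rel e B) a b.
  move=> a b aB bB; apply/negPn/negP => nab.
  apply: (Smin (S :\ s)); first by apply/properP; split; [apply: subD1set | exists s; rewrite ?setD11].
  by exists a, b.
have [w0 [w0A nvw0]] : exists w0, w0 \in A /\ ~~ cA v w0.
  case cvx: (cA v x); last by exists x; rewrite cvx.
  exists y; split => //; apply/negP => cvy; case/negP: nxy.
  by apply: connect_trans cvy; rewrite /cA symA.
have inA' u z : u \in A -> cA u z -> z \in A.
  move=> uA cz; apply/negPn/negP => zA.
  have [x' [y' [_ ny /= /and3P [_ yA' _]]]] := @exit_edge _ _ [pred z | z \in A] _ _ cz uA zA.
  by move: ny; rewrite /= yA'.
have inA z := inA' v z vA.
have AB z : z \in A -> z \in B by rewrite inB => ->.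
have sB : s \in B by rewrite inB eqxx orbT.
have [b [Cb ebs]] : exists b, cA v b /\ e b s.
  have [x' [y' [Cx nCy r]]] := @exit_edge _ _ (cA v) _ _ (cB _ _ (AB _ vA) (AB _ w0A))
     (connect0 _ v) nvw0.
  move: r => /= /and3P [x'B y'B exy].
  have x'A := inA _ Cx.
  case y'A: (y' \in A).
    case/negP: nCy; apply: connect_trans Cx (connect1 _); rewrite /induced_rel /=.
    by rewrite y'A exy andbT x'A.
  move: y'B; rewrite inB y'A /= => /eqP <-.
  by exists x'.
have nw0v : ~~ cA w0 v by rewrite /cA symA.
have [w [Cw ews]] : exists w, cA w0 w /\ e w s.
  have [x' [y' [Cx nCy r]]] := @exit_edge _ _ (cA w0) _ _ (cB _ _ (AB _ w0A) (AB _ vA))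
     (connect0 _ w0) nw0v.
  move: r => /= /and3P [x'B y'B exy].
  have x'A := inA' _ _ w0A Cx.
  case y'A: (y' \in A).
    case/negP: nCy; apply: connect_trans Cx (connect1 _); rewrite /induced_rel /=.
    by rewrite y'A exy andbT x'A.
  move: y'B; rewrite inB y'A /= => /eqP <-.
  by exists x'.
have wA := inA' _ _ w0A Cw.
have nvw : ~~ cA v w.
  apply/negP => cvw; case/negP: nvw0; apply: connect_trans cvw _.
  by rewrite /cA symA.
have nzw z : cA v z -> ~~ e z w.
  move=> cz; have zA := inA _ cz; apply/negP => ezw; case/negP: nvw; apply: connect_trans cz (connect1 _).
  by rewrite /induced_rel /= ezw wA zA.
have Xv : [pred z | cA v z && ~~ e z s] v by rewrite /= nvs andbT; apply: connect0.
have nXb : ~~ [pred z | cA v z && ~~ e z s] b by rewrite /= ebs andbF.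
have [a [b' [/andP [Ca nas] nX rab]]] := @exit_edge _ _ _ _ _ Cb Xv nXb.
have Cb' : cA v b' by apply: connect_trans Ca (connect1 rab).
move: nX; rewrite /= Cb' /= negbK => ebs'.
move: rab; rewrite /induced_rel /= => /and3P [_ _ eab].
apply: cog; exists a, b', s, w; split; last exact: nzw.
split => //; [by rewrite esy | exact: nzw].
Qed.
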